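(* For all non-negative integers $s,k$ with $k\le s$, $$s(s-1)\cdots(s-k+1)\ \ge\ \Big(s-\frac{e-1}{e}\,k\Big)^k.$$ *)

(* Defs.v *)
From Stdlib Require Import Reals Lra Lia.
Open Scope R_scope.

Fixpoint falling (s k : nat) : R :=
  match k with
  | O => 1
  | S k' => falling s k' * (INR s - INR k')
  end.

(* Main.v *)
Require Import Defs.
From Stdlib Require Import Reals Lra Lia Psatz.
Open Scope R_scope.

Lemma Rdiv_le0 x y : 0 <= x -> 0 < y -> 0 <= x / y.
Proof. intros. unfold Rdiv. apply Rmult_le_pos; [lra|]. left; apply Rinv_0_lt_compat; lra. Qed.

Lemma exp_chord (z : R) : 0 <= z <= 1 -> exp z <= 1 + (exp 1 - 1) * z.
Proof.
  intros [H0 H1].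
  destruct (Req_dec z 0) as [->|Hz0]; [rewrite exp_0; lra|].
  destruct (Req_dec z 1) as [->|Hz1]; [lra|].
  set (g := fun x => exp x - (exp 1 - 1) * x).
  set (g' := fun x => exp x - (exp 1 - 1)).
  assert (Hd : forall c, derivable_pt_lim g c (g' c)).
  { intro c. unfold g, g'.
    replace (exp c - (exp 1 - 1)) with (exp c - (exp 1 - 1) * 1) by ring.
    apply (derivable_pt_lim_minus exp (fun x => (exp 1 - 1) * x)).
    - apply derivable_pt_lim_exp.
    - apply (derivable_pt_lim_scal id (exp 1 - 1) c 1). apply derivable_pt_lim_id. }
  destruct (MVT_cor2 g g' 0 z ltac:(lra) (fun c _ => Hd c)) as [c1 [E1 [Hc1a Hc1b]]].
  destruct (MVT_cor2 g g' z 1 ltac:(lra) (fun c _ => Hd c)) as [c2 [E2 [Hc2a Hc2b]]].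
  assert (Hlt : exp c1 < exp c2) by (apply exp_increasing; lra).
  unfold g, g' in E1, E2. rewrite exp_0 in E1.
  destruct (Rle_dec (exp z) (1 + (exp 1 - 1) * z)) as [Hok|Hbad]; [exact Hok|exfalso].
  set (A := exp c1 - (exp 1 - 1)) in *. set (B := exp c2 - (exp 1 - 1)) in *.
  assert (HA : 0 < A * (z - 0)) by lra.
  assert (HB : B * (1 - z) < 0) by lra.
  assert (0 < A) by (destruct (Rle_dec A 0); [nra|lra]).
  assert (B < 0) by (destruct (Rle_dec 0 B); [nra|lra]).
  unfold A, B in *. lra.
Qed.

Lemma exp_pow_le (y : R) (k : nat) : 0 <= y -> (1 + y) ^ k <= exp (INR k * y).
Proof.
  intro Hy. induction k as [|k IH].
  - simpl. rewrite Rmult_0_l, exp_0. lra.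
  - rewrite S_INR. replace ((INR k + 1) * y) with (y + INR k * y) by ring.
    rewrite exp_plus. simpl.
    apply Rmult_le_compat; try lra.
    + apply pow_le; lra.
    + apply exp_ineq1_le.
Qed.

Lemma falling_S (k s : nat) : falling (S s) (S k) = INR (S s) * falling s k.
Proof.
  induction k as [|k IH].
  - simpl. ring.
  - change (falling (S s) (S (S k))) with (falling (S s) (S k) * (INR (S s) - INR (S k))).
    rewrite IH. simpl falling. rewrite !S_INR. ring.
Qed.

Lemma main (u k : nat) :
  falling (u + k) k >= (INR u + INR k / exp 1) ^ k.
Proof.
  assert (HE : 1 < exp 1) by (pose proof (exp_increasing 0 1 ltac:(lra)) as Hx; rewrite exp_0 in Hx; exact Hx).
  induction k as [|k IH].
  - simpl. lra.
  - rewrite Nat.add_succ_r, falling_S.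
    set (E := exp 1) in *.
    set (U := INR u). set (K := INR k).
    assert (HU : 0 <= U) by apply pos_INR.
    assert (HK : 0 <= K) by apply pos_INR.
    set (a := U + K / E) in *.
    replace (INR (S k)) with (K + 1) by (unfold K; rewrite S_INR; ring).
    replace (U + (K + 1) / E) with (a + 1 / E) by (unfold a; field; lra).
    replace (INR (S (u + k))) with (U + K + 1) by (unfold U, K; rewrite S_INR, plus_INR; ring).
    assert (Ha : 0 <= a) by (unfold a; apply Rplus_le_le_0_compat; [lra| apply Rdiv_le0; lra]).
    assert (Hak : 0 <= a ^ k) by (apply pow_le; lra).
    assert (Hf : falling (u + k) k >= a ^ k) by exact IH.
    destruct (Req_dec a 0) as [Ha0|Ha0].
    +
      assert (K = 0).
      { unfold a in Ha0. assert (0 <= K / E) by (apply Rdiv_le0; lra). 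
        assert (K / E = 0) by lra. 
        apply (Rmult_eq_compat_r E) in H0. unfold Rdiv in H0.
        rewrite Rmult_assoc, Rinv_l, Rmult_1_r, Rmult_0_l in H0; lra. }
      assert (k = 0%nat) by (apply INR_eq; unfold K in H; rewrite H; reflexivity).
      subst k. assert (HiE : 1 / E < 1) by (apply (Rmult_lt_reg_r E); [lra|]; field_simplify; lra).
      simpl falling. simpl pow. rewrite Ha0. lra.
    + assert (Hapos : 0 < a) by lra.
      set (y := 1 / (E * a)).
      assert (Hy : 0 <= y) by (unfold y; apply Rdiv_le0; nra).
      set (w := K * y).
      assert (HwE : w * (E * a) = K) by (unfold w, y; field; split; lra).
      assert (HEa : E * a = E * U + K) by (unfold a; field; lra).
      assert (Hw1 : w <= 1).
      { assert (w * (E * a) <= 1 * (E * a)) by nra.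
        apply Rmult_le_reg_r with (E * a); nra. }
      assert (Hw0 : 0 <= w) by (unfold w; nra).
      assert (Hpow : (1 + y) ^ k <= 1 + (E - 1) * w).
      { eapply Rle_trans. apply exp_pow_le; exact Hy. apply exp_chord; split; assumption. }
      assert (Hsplit : (a + 1 / E) ^ k = a ^ k * (1 + y) ^ k).
      { rewrite <- Rpow_mult_distr. f_equal. unfold y. field. split; lra. }
      assert (Hmid : (a + 1 / E) * (1 + (E - 1) * w) <= U + K + 1).
      { apply Rmult_le_reg_l with E; [lra|].
        replace (E * ((a + 1 / E) * (1 + (E - 1) * w))) with
          (E * a + (E - 1) * (w * (E * a)) + 1 + (E - 1) * w) by (field; lra).
        rewrite HwE, HEa. nra. }
      simpl (_ ^ S k). rewrite Hsplit.
      assert (H1 : 0 <= (1 + y) ^ k) by (apply pow_le; lra).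
      assert (H2 : 0 <= a + 1 / E) by (assert (0 < 1 / E) by (apply Rdiv_lt_0_compat; lra); lra).
      apply Rle_ge.
      apply Rle_trans with ((a + 1 / E) * (a ^ k * (1 + (E - 1) * w))).
      { apply Rmult_le_compat_l; [lra|]. apply Rmult_le_compat_l; lra. }
      apply Rle_trans with ((U + K + 1) * a ^ k).
      { nra. }
      apply Rmult_le_compat_l; lra.
Qed.

Theorem lemma3 (s k : nat) (hks : (k <= s)%nat) :
  falling s k >= (INR s - (exp 1 - 1) / exp 1 * INR k) ^ k.
Proof.
  assert (HE : 0 < exp 1) by apply exp_pos.
  replace s with ((s - k) + k)%nat by lia.
  replace (INR (s - k + k) - (exp 1 - 1) / exp 1 * INR k)
    with (INR (s - k) + INR k / exp 1) by (rewrite plus_INR; field; lra).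
  apply main.
Qed.
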